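(* Let $p>0$ be a prime and let $(S,\mathfrak{n},K)$ be a standard graded $F$-finite regular ring of characteristic $p$ (i.e. a polynomial ring over an $F$-finite field $K$ with homogeneous maximal ideal $\mathfrak{n}$). Let $I\subseteq S$ be a homogeneous ideal such that $R=S/I$ is $F$-pure, and let $\mathfrak{m}=\mathfrak{n}R$. Then $\mathcal{P}(R)=\mathfrak{m}$ if and only if $(I^{[p^e]}:I)\subseteq(\mathfrak{n}^{[p^e]}:\mathfrak{n})$ for all $e\geq 0$.
   Context: For an ideal $J$, $J^{[p^e]}$ is the ideal generated by $p^e$-th powers of elements of $J$. $F$-pure: the Frobenius map is pure. $I_e(R)=\{r\in R:\varphi(r^{1/p^e})\in\mathfrak{m}\text{ for all }\varphi\in\operatorname{Hom}_R(R^{1/p^e},R)\}$ and the splitting prime is $\mathcal{P}(R)=\bigcap_e I_e(R)$. *)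

(* Defs.v *)
From HB Require Import structures.
From mathcomp Require Import all_boot all_order all_algebra.
From mathcomp Require Import mpoly.
Set Implicit Arguments. Unset Strict Implicit. Unset Printing Implicit Defensive.
Import GRing.Theory.
Local Open Scope ring_scope.

Definition frob_power (A : comNzRingType) (q : nat) (J : A -> Prop) : A -> Prop :=
  fun f => exists s : seq (A * A),
    (forall x, x \in s -> J x.2) /\ f = \sum_(x <- s) x.1 * x.2 ^+ q.

Definition colon (A : comNzRingType) (J L : A -> Prop) : A -> Prop :=
  fun f => forall g, L g -> J (f * g).

Definition subideal (A : comNzRingType) (J L : A -> Prop) : Prop :=
  forall f, J f -> L f.

Definition homog_comp (K : fieldType) (n d : nat) (f : {mpoly K[n]}) : {mpoly K[n]} :=
  \sum_(m <- msupp f | mdeg m == d) f@_m *: 'X_[m].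

Definition homogeneous_ideal (K : fieldType) (n : nat) (I : {mpoly K[n]} -> Prop) : Prop :=
  forall f d, I f -> I (homog_comp d f).

Definition hmax (K : fieldType) (n : nat) : {mpoly K[n]} -> Prop :=
  fun f => f@_0%MM = 0.

Definition Ffinite_field (p : nat) (K : fieldType) : Prop :=
  exists s : seq K, forall x : K, exists c : seq K,
    size c = size s /\ x = \sum_(i < size s) c`_i ^+ p * s`_i.

(* phi in Hom_R(R^{1/q}, R), identifying R^{1/q} with R: r . y^{1/q} = (r^q y)^{1/q} *)
Definition frob_hom (R : comNzRingType) (q : nat) (phi : R -> R) : Prop :=
  (forall x y, phi (x + y) = phi x + phi y) /\
  (forall r x, phi (r ^+ q * x) = r * phi x).

Definition Ie (R : comNzRingType) (p e : nat) (m : R -> Prop) : R -> Prop :=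
  fun r => forall phi, frob_hom (p ^ e) phi -> m (phi r).

Definition splitting_prime (R : comNzRingType) (p : nat) (m : R -> Prop) : R -> Prop :=
  fun r => forall e, Ie p e m r.

(* F-pure: the Frobenius R -> R^{1/p} is a pure map of R-modules, expressed by
   the standard criterion for purity of a module map M -> N: every finite
   R-linear system with constants from M solvable in N is solvable in M.
   For F : R -> R^{1/p}, a system sum_j a_ij y_j = F(c_i) in R^{1/p} reads
   sum_j a_ij^p y_j = c_i^p in R. *)
Definition Fpure (R : comNzRingType) (p : nat) : Prop :=
  forall (a b : nat) (A : 'M[R]_(a, b)) (c : 'cV[R]_a),
    (exists y : 'cV[R]_b, map_mx (fun x => x ^+ p) A *m y = map_mx (fun x => x ^+ p) c) ->
    exists x : 'cV[R]_b, A *m x = c.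

(* Main.v *)
Require Import Defs.
From HB Require Import structures.
From mathcomp Require Import all_boot all_order all_algebra.
From mathcomp Require Import mpoly.
From mathcomp Require Import ring zify.
From Stdlib Require Import IndefiniteDescription Classical.
Set Implicit Arguments. Unset Strict Implicit. Unset Printing Implicit Defensive.
Import GRing.Theory.
Local Open Scope ring_scope.

Section FrobHom.
Variables (A : comNzRingType) (q : nat) (phi : A -> A).
Hypothesis H : frob_hom q phi.

Lemma fh0 : phi 0 = 0.
Proof. by case: H => HD _; apply: (@addrI _ (phi 0)); rewrite -HD !addr0. Qed.

Lemma fhD x y : phi (x + y) = phi x + phi y.
Proof. by case: H. Qed.

Lemma fhM r x : phi (r ^+ q * x) = r * phi x.
Proof. by case: H. Qed.

Lemma fhN x : phi (- x) = - phi x.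
Proof. by apply: (@addrI _ (phi x)); rewrite -fhD !subrr fh0. Qed.

Lemma fhB x y : phi (x - y) = phi x - phi y.
Proof. by rewrite fhD fhN. Qed.

Lemma fh_sum (I : Type) (r : seq I) (P : pred I) (F : I -> A) :
  phi (\sum_(i <- r | P i) F i) = \sum_(i <- r | P i) phi (F i).
Proof. exact: (big_morph phi fhD fh0). Qed.
End FrobHom.

Definition is_ideal (A : comNzRingType) (J : A -> Prop) :=
  [/\ J 0, (forall x y, J x -> J y -> J (x + y)) & (forall x y, J y -> J (x * y))].

Lemma ideal_sum (A : comNzRingType) (J : A -> Prop) (I : Type) (r : seq I) (F : I -> A) :
  is_ideal J -> (forall i, J (F i)) -> J (\sum_(i <- r) F i).
Proof.
move=> [J0 JD _] HF; elim: r => [|a r IH]; first by rewrite big_nil.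
by rewrite big_cons; apply: JD.
Qed.

Lemma frob_power_hom (A : comNzRingType) (q : nat) (J : A -> Prop) phi v :
  is_ideal J -> frob_hom q phi -> frob_power q J v -> J (phi v).
Proof.
move=> IJ Hphi [s [Hs ->]]; rewrite (fh_sum Hphi).
rewrite big_seq; apply: (big_ind J); first by case: IJ.
  by case: IJ.
move=> x xs; rewrite mulrC (fhM Hphi) mulrC; case: IJ => _ _ JM; apply: JM.
exact: Hs.
Qed.

Lemma frob_power_dec (A : comNzRingType) (q : nat) (J : A -> Prop) (B : finType)
   (e : B -> A) (g : B -> A) :
  (forall b, J (g b)) -> frob_power q J (\sum_b g b ^+ q * e b).
Proof.
move=> Hg; exists [seq (e b, g b) | b <- index_enum B]; split.
  by move=> x /mapP [b _ ->]; exact: Hg.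
by rewrite big_map; apply: eq_bigr => b _; rewrite mulrC.
Qed.

Definition fbasis (S : comNzRingType) (q : nat) :=
  exists (B : finType) (e : B -> S) (pb : B -> S -> S) (Phi : S -> S) (t : B -> S),
   [/\ (forall b, frob_hom q (pb b)), frob_hom q Phi,
       (forall v, v = \sum_b pb b v ^+ q * e b) &
       (forall b v, pb b v = Phi (t b * v))].

Section Main.
Variables (S R : comNzRingType) (pi : {rmorphism S -> R}) (I J : S -> Prop) (q : nat).
Hypothesis piS : forall r, exists f, pi f = r.
Hypothesis HI : forall f, I f <-> pi f = 0.
Hypothesis IJ : is_ideal J.
Hypothesis kerJ : forall f, pi f = 0 -> J f.
Hypothesis FB : fbasis S q.

Let mm : R -> Prop := fun r => exists f, J f /\ pi f = r.

Definition sec (r : R) : S := proj1_sig (constructive_indefinite_description _ (piS r)).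
Lemma secK r : pi (sec r) = r.
Proof. exact: proj2_sig (constructive_indefinite_description _ (piS r)). Qed.

Lemma idealI : is_ideal I.
Proof.
split; first by apply/HI; rewrite rmorph0.
  by move=> x y /HI Hx /HI Hy; apply/HI; rewrite rmorphD Hx Hy addr0.
by move=> x y /HI Hy; apply/HI; rewrite rmorphM Hy mulr0.
Qed.

Lemma dir1 :
  (forall g, J g -> forall phi, frob_hom q phi -> mm (phi (pi g))) ->
  subideal (colon (frob_power q I) I) (colon (frob_power q J) J).
Proof.
move=> Hm u Hu g Jg.
case: FB => B [e [pb [Phi [t [pbH PhiH dec _]]]]].
rewrite (dec (u * g)); apply: frob_power_dec => b.
have KI f : pi f = 0 -> pi (pb b (u * f)) = 0.
  move=> /HI If; apply/HI; apply: (frob_power_hom idealI (pbH b)); exact: Hu.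
pose ph r := pi (pb b (u * sec r)).
have phH : frob_hom q ph.
  split.
    move=> x y; rewrite /ph.
    have := KI (sec (x + y) - sec x - sec y).
    rewrite !rmorphB !secK (addrC x) addrK subrr => /(_ erefl).
    rewrite !mulrBr !(fhB (pbH b)) !rmorphB => H0.
    by apply/eqP; rewrite -subr_eq0 opprD addrA H0.
  move=> r x; rewrite /ph.
  have := KI (sec (r ^+ q * x) - sec r ^+ q * sec x).
  rewrite !rmorphB rmorphM rmorphXn !secK subrr => /(_ erefl).
  rewrite mulrBr (fhB (pbH b)) rmorphB => /eqP; rewrite subr_eq0 => /eqP ->.
  by rewrite mulrCA (fhM (pbH b)) rmorphM secK.
have [f [Jf Ef]] := Hm g Jg ph phH.
have Jd : J (pb b (u * g) - f).
  apply: kerJ; rewrite rmorphB Ef /ph.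
  have := KI (sec (pi g) - g); rewrite rmorphB secK subrr => /(_ erefl).
  by rewrite mulrBr (fhB (pbH b)) rmorphB => /eqP; rewrite subr_eq0 => /eqP ->; rewrite subrr.
case: IJ => _ JD _; have := JD _ _ Jd Jf; by rewrite subrK.
Qed.

Lemma dir2 :
  subideal (colon (frob_power q I) I) (colon (frob_power q J) J) ->
  (forall g, J g -> forall phi, frob_hom q phi -> mm (phi (pi g))).
Proof.
move=> Hc g Jg ph phH.
case: FB => B [e [pb [Phi [t [pbH PhiH dec Ht]]]]].
pose psi f := \sum_b pb b f * sec (ph (pi (e b))).
have psiH : frob_hom q psi.
  split.
    by move=> x y; rewrite /psi -big_split; apply: eq_bigr => b _; rewrite (fhD (pbH b)) mulrDl.
  move=> r x; rewrite /psi mulr_sumr; apply: eq_bigr => b _.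
  by rewrite (fhM (pbH b)) mulrA.
have phsum : forall (r : seq B) (F : B -> R), ph (\sum_(i <- r) F i) = \sum_(i <- r) ph (F i).
  by move=> r F; apply: (fh_sum phH).
have pipsi f : pi (psi f) = ph (pi f).
  rewrite /psi rmorph_sum {2}(dec f) rmorph_sum phsum.
  apply: eq_bigr => b _; by rewrite rmorphM secK -(fhM phH) rmorphM rmorphXn.
have psiE f : psi f = \sum_b pb b f * psi (e b).
  rewrite {1}(dec f) (fh_sum psiH); apply: eq_bigr => b _; by rewrite (fhM psiH).
pose u := \sum_b psi (e b) ^+ q * t b.
have Phiu f : Phi (u * f) = psi f.
  rewrite /u mulr_suml (fh_sum PhiH) (psiE f); apply: eq_bigr => b _.
  by rewrite -mulrA (fhM PhiH) -Ht mulrC.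
have Hu : colon (frob_power q I) I u.
  move=> i /HI Ii; rewrite (dec (u * i)); apply: frob_power_dec => b.
  apply/HI; rewrite Ht mulrCA Phiu pipsi rmorphM Ii mulr0.
  by apply: fh0 phH.
have := Hc u Hu g Jg => Hug.
exists (psi g); split; last exact: pipsi.
rewrite -Phiu; exact: (frob_power_hom IJ PhiH Hug).
Qed.
End Main.

Definition frobadd (S : comNzRingType) (q : nat) :=
  (0 < q)%N /\ forall x y : S, (x + y) ^+ q = x ^+ q + y ^+ q.

Section Frob.
Variables (S : comNzRingType) (q : nat).
Hypothesis Hq : frobadd S q.

Lemma fr0 : (0 : S) ^+ q = 0.
Proof. by case: Hq => q0 _; rewrite expr0n eqn0Ngt q0. Qed.

Lemma frD (x y : S) : (x + y) ^+ q = x ^+ q + y ^+ q.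
Proof. by case: Hq. Qed.

Lemma fr_sum (I : Type) (r : seq I) (P : pred I) (F : I -> S) :
  (\sum_(i <- r | P i) F i) ^+ q = \sum_(i <- r | P i) F i ^+ q.
Proof. exact: (big_morph (fun x : S => x ^+ q) frD fr0). Qed.

Lemma frB (x y : S) : (x - y) ^+ q = x ^+ q - y ^+ q.
Proof. by rewrite -[in RHS](subrK y x) [in RHS]frD addrK. Qed.

Section SpanIndep.
Variables (B : finType) (e : B -> S).
Hypothesis Hspan : forall v, exists g : B -> S, v = \sum_b g b ^+ q * e b.
Hypothesis Hind : forall g : B -> S, \sum_b g b ^+ q * e b = 0 -> forall b, g b = 0.

Lemma uniq_coord (g h : B -> S) :
  \sum_b g b ^+ q * e b = \sum_b h b ^+ q * e b -> forall b, g b = h b.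
Proof.
move=> E b; apply/eqP; rewrite -subr_eq0; apply/eqP.
apply: (Hind (g := fun b => g b - h b)).
under eq_bigr => i _ do rewrite frB mulrBl.
by rewrite sumrB E subrr.
Qed.

Definition crd (b : B) (v : S) : S :=
  proj1_sig (constructive_indefinite_description _ (Hspan v)) b.

Lemma crdE v : v = \sum_b crd b v ^+ q * e b.
Proof. exact: proj2_sig (constructive_indefinite_description _ (Hspan v)). Qed.

Lemma crd_uniq (g : B -> S) v : v = \sum_b g b ^+ q * e b -> forall b, crd b v = g b.
Proof. by move=> E; apply: uniq_coord; rewrite -crdE. Qed.

Lemma crd_hom b : frob_hom q (crd b).
Proof.
split.
  move=> x y; apply: (crd_uniq (g := fun b => crd b x + crd b y)).
  under eq_bigr => i _ do rewrite frD mulrDl.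
  by rewrite big_split /= -!crdE.
move=> r x; apply: (crd_uniq (g := fun b => r * crd b x)).
under eq_bigr => i _ do rewrite exprMn -mulrA.
by rewrite -mulr_sumr -crdE.
Qed.
End SpanIndep.
End Frob.

Lemma fbasis1 (S : comNzRingType) : fbasis S 1.
Proof.
exists unit, (fun _ => 1), (fun _ v => v), id, (fun _ => 1); split.
- by move=> _; split => // r x; rewrite expr1.
- by split => // r x; rewrite expr1.
- by move=> v; rewrite big_const card_unit iter_addr addr0 expr1 mulr1.
- by move=> _ v; rewrite mul1r.
Qed.

Lemma fbasis_comp (S : comNzRingType) (q1 q2 : nat) :
  frobadd S q1 -> fbasis S q1 -> fbasis S q2 -> fbasis S (q2 * q1).
Proof.
move=> F1 [B1 [e1 [p1 [P1 [t1 [p1H P1H d1 T1]]]]]] [B2 [e2 [p2 [P2 [t2 [p2H P2H d2 T2]]]]]].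
exists (B1 * B2)%type, (fun bc => e2 bc.2 ^+ q1 * e1 bc.1),
  (fun bc v => p2 bc.2 (p1 bc.1 v)), (fun v => P2 (P1 v)),
  (fun bc => t2 bc.2 ^+ q1 * t1 bc.1); split.
- move=> [b c]; split => [x y|r x] /=; first by rewrite (fhD (p1H b)) (fhD (p2H c)).
  by rewrite exprM (fhM (p1H b)) (fhM (p2H c)).
- split => [x y|r x] /=; first by rewrite (fhD P1H) (fhD P2H).
  by rewrite exprM (fhM P1H) (fhM P2H).
- move=> v; rewrite -(pair_bigA _ (fun b c => p2 c (p1 b v) ^+ (q2 * q1) * (e2 c ^+ q1 * e1 b))) /= {1}(d1 v); apply: eq_bigr => b _.
  rewrite {1}(d2 (p1 b v)) fr_sum // mulr_suml; apply: eq_bigr => c _ /=.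
  by rewrite exprMn -exprM mulrA.
- move=> [b c] v /=; rewrite (T1 b) (T2 c) -(fhM P1H) mulrA //.
Qed.

Lemma frobadd_pchar (S : comNzRingType) p : p \in [pchar S] -> frobadd S p.
Proof.
move=> pS; split; first exact: prime_gt0 (pcharf_prime pS).
by move=> x y; apply: (pFrobenius_autD_comm pS); apply: mulrC.
Qed.

Section KLevel.
Variables (K : fieldType) (p : nat).
Hypothesis pK : p \in [pchar K].

Definition genK N (s : 'I_N -> K) :=
  forall x : K, exists c : 'I_N -> K, x = \sum_i c i ^+ p * s i.
Definition indepK N (s : 'I_N -> K) :=
  forall c : 'I_N -> K, \sum_i c i ^+ p * s i = 0 -> forall i, c i = 0.

Lemma reduceK N (s : 'I_N -> K) : genK s -> exists N' (s' : 'I_N' -> K), genK s' /\ indepK s'.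
Proof.
have F := frobadd_pchar pK.
elim: N s => [|N IH] s Hg.
  by exists 0%N, s; split => // c _ [].
case: (classic (indepK s)) => Hi; first by exists N.+1, s.
have [c [H0 [k ck]]] : exists c : 'I_N.+1 -> K, \sum_i c i ^+ p * s i = 0 /\ exists k, c k <> 0.
  apply: NNPP => Hn; apply: Hi => c Hc i; apply: NNPP => ci; apply: Hn.
  by exists c; split => //; exists i.
apply: (IH (fun i => s (lift k i))) => x.
have [d Hd] := Hg x.
exists (fun i => d (lift k i) - (d k / c k) * c (lift k i)).
move: H0 Hd; rewrite !(bigD1_ord k) //= => H0 ->.
have E i : (d (lift k i) - d k / c k * c (lift k i)) ^+ p * s (lift k i) =
    d (lift k i) ^+ p * s (lift k i) - (d k / c k) ^+ p * (c (lift k i) ^+ p * s (lift k i)).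
  by rewrite (frB F) exprMn mulrBl mulrA.
rewrite (eq_bigr _ (fun i _ => E i)).
rewrite sumrB -mulr_sumr.
set A := \sum_(i < N) _.
set C := \sum_(i < N) _.
have -> : C = - (c k ^+ p * s k) by apply/eqP; rewrite -addr_eq0 addrC H0.
rewrite expr_div_n; field.
by rewrite expf_neq0 //; apply/eqP.
Qed.
End KLevel.

Lemma Kbasis (K : fieldType) (p : nat) : p \in [pchar K] -> Ffinite_field p K ->
 exists N (s : 'I_N -> K) (cK : 'I_N -> K -> K) (j0 : 'I_N) (d : 'I_N -> K),
 [/\ forall j, frob_hom p (cK j),
     forall x, x = \sum_i cK i x ^+ p * s i,
     forall g x, x = \sum_i g i ^+ p * s i -> forall i, cK i x = g i
   & forall j k, cK j0 (d j * s k) = (j == k)%:R].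
Proof.
move=> pK [s0 Hs0].
have F := frobadd_pchar pK.
have G0 : genK p (fun i : 'I_(size s0) => s0`_i).
  move=> x; have [c [_ Hc]] := Hs0 x; by exists (fun i => c`_i).
have [N [s [Hg Hi]]] := reduceK pK G0.
pose cK := crd Hg.
have cKH j : frob_hom p (cK j) := crd_hom F Hg Hi j.
have cKE x : x = \sum_i cK i x ^+ p * s i := crdE Hg x.
have cKU : forall g x, x = \sum_i g i ^+ p * s i -> forall i, cK i x = g i := fun g x H => crd_uniq F Hg Hi H.
have N0 : (0 < N)%N.
  case: N s Hg Hi cK cKH cKE cKU => // s Hg _ _ _ _ _.
  have [c Hc] := Hg 1; move: Hc; rewrite big_ord0 => /eqP; by rewrite oner_eq0.
pose j0 := Ordinal N0.
have cKs j k : cK j (s k) = (k == j)%:R.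
  apply: (cKU (fun i => (k == i)%:R)).
  rewrite (bigD1 k) //= eqxx expr1n mul1r big1 ?addr0 // => i ik.
  by rewrite eq_sym (negbTE ik) expr0n eqn0Ngt (prime_gt0 (pcharf_prime pK)) mul0r.
pose G : 'M[K]_N := \matrix_(i, k) cK j0 (s i * s k).
have Gu : G \in unitmx.
  rewrite -row_free_unit; apply: inj_row_free => v Hv.
  pose w := \sum_i v 0 i ^+ p * s i.
  have Hwy y : cK j0 (w * y) = 0.
    rewrite (cKE y) mulr_sumr (fh_sum (cKH j0)) big1 // => k _.
    rewrite mulrCA (fhM (cKH j0)) /w mulr_suml (fh_sum (cKH j0)).
    have := congr1 (fun M : 'rV[K]_N => M 0 k) Hv; rewrite !mxE => Hk.
    have -> : \sum_i cK j0 (v 0 i ^+ p * s i * s k) = \sum_j v 0 j * G j k.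
      by apply: eq_bigr => i _; rewrite -mulrA (fhM (cKH j0)) mxE.
    by rewrite Hk mulr0.
  have Hw : w = 0.
    apply/eqP; apply/negP => nz.
    have := Hwy (w^-1 * s j0); rewrite mulrA (mulfV (introN idP nz)) mul1r cKs eqxx => /eqP.
    by rewrite oner_eq0.
  by apply/rowP => i; rewrite mxE; apply: (Hi (fun i => v 0 i) Hw i).
pose C := invmx G.
exists N, s, cK, j0, (fun j => \sum_i C j i ^+ p * s i); split => //.
move=> j k; rewrite mulr_suml (fh_sum (cKH j0)).
have := congr1 (fun M : 'M[K]_N => M j k) (mulVmx Gu); rewrite !mxE => <-.
by apply: eq_bigr => i _; rewrite -mulrA (fhM (cKH j0)) mxE.
Qed.

Lemma modtop p x y : (0 < p)%N -> (x < p)%N -> (y < p)%N ->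
  ((p.-1 - x + y) %% p == p.-1)%N = (x == y).
Proof.
move=> p0 xp yp.
case: (ltngtP x y) => Hxy.
- have -> : (p.-1 - x + y = (y - x).-1 + p)%N by lia.
  rewrite modnDr modn_small; last by lia.
  apply/negbTE; apply/eqP; lia.
- rewrite modn_small; last by lia.
  apply/negbTE; apply/eqP; lia.
- rewrite Hxy modn_small; last by lia.
  apply/eqP; lia.
Qed.

Section MP.
Variables (K : fieldType) (n p : nat).
Hypothesis pK : p \in [pchar K].
Variables (N : nat) (s : 'I_N -> K) (cK : 'I_N -> K -> K) (j0 : 'I_N) (d : 'I_N -> K).
Hypotheses (cKH : forall j, frob_hom p (cK j))
  (cKE : forall x, x = \sum_i cK i x ^+ p * s i)
  (cKU : forall g x, x = \sum_i g i ^+ p * s i -> forall i, cK i x = g i)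
  (cKd : forall j k, cK j0 (d j * s k) = (j == k)%:R).

Let p0 : (0 < p)%N := prime_gt0 (pcharf_prime pK).
Local Notation S := {mpoly K[n]}.
Local Notation AT := {ffun 'I_n -> 'I_p}.

Let FS : frobadd S p.
Proof. apply: frobadd_pchar; exact: (rmorph_pchar (@mpolyC n K) pK). Qed.

Definition ma (a : AT) : 'X_{1..n} := [multinom (a i : nat) | i < n].
Definition cdiv (c : 'X_{1..n}) : 'X_{1..n} := [multinom (c i %/ p)%N | i < n].
Definition cmod (c : 'X_{1..n}) : AT := [ffun i => Ordinal (ltn_pmod (c i) p0)].

Lemma cdecomp c : c = (cdiv c *+ p + ma (cmod c))%MM.
Proof.
by apply/mnmP => i; rewrite mnmDE mulmnE !mnmE ffunE /= -divn_eq.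
Qed.

Lemma cdivK m a : cdiv (m *+ p + ma a)%MM = m.
Proof.
apply/mnmP => i; rewrite mnmE mnmDE mulmnE mnmE divnMDl // divn_small ?addn0 //.
Qed.

Lemma cmodK m a : cmod (m *+ p + ma a)%MM = a.
Proof.
apply/ffunP => i; apply/val_inj; rewrite ffunE /= mnmDE mulmnE mnmE modnMDl.
by rewrite modn_small // ltn_ord.
Qed.

Lemma eq_decomp m a m' a' : ((m *+ p + ma a)%MM == (m' *+ p + ma a')%MM) = (m == m') && (a == a').
Proof.
apply/eqP/andP => [E|[/eqP -> /eqP ->]] //.
by split; apply/eqP; [rewrite -(cdivK m a) E cdivK | rewrite -(cmodK m a) E cmodK].
Qed.

Lemma frob_mpoly (g : S) : g ^+ p = \sum_(m <- msupp g) (g@_m ^+ p) *: 'X_[m *+ p].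
Proof.
rewrite {1}(mpolyE g) (fr_sum FS); apply: eq_bigr => m _.
by rewrite exprZn mpolyXn.
Qed.

Definition eb (b : AT * 'I_N) : S := 'X_[ma b.1] * (s b.2)%:MP.

Lemma coefx (g : S) a j m' a0 :
  (g ^+ p * eb (a, j))@_(m' *+ p + ma a0)%MM = if a == a0 then (g@_m')^+p * s j else 0.
Proof.
rewrite frob_mpoly mulr_suml /eb /=.
have E m : g@_m ^+ p *: 'X_[m *+ p] * ('X_[ma a] * (s j)%:MP)
           = (g@_m ^+ p * s j) *: 'X_[(m *+ p + ma a)%MM].
  by rewrite -scalerAl mpolyXD mulrA mulrC mul_mpolyC scalerA.
rewrite (eq_bigr _ (fun m _ => E m)) raddf_sum /=.
under eq_bigr => m _ do rewrite mcoeffZ mcoeffX eq_decomp.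
case: (a == a0); last first.
  by rewrite big1 // => m _; rewrite andbF mulr0.
under eq_bigr => m _ do rewrite andbT.
have [H|H] := boolP (m' \in msupp g).
  rewrite (bigD1_seq m') ?msupp_uniq //= eqxx mulr1 big1 ?addr0 // => m /negbTE ->.
  by rewrite mulr0.
rewrite big_seq big1 => [|m mg]; last by rewrite (_ : (m == m') = false) ?mulr0 //; apply/negbTE; apply: contra H => /eqP <-.
move: H; rewrite mcoeff_msupp negbK => /eqP ->.
by rewrite expr0n eqn0Ngt p0 mul0r.
Qed.

Lemma sum_pairs (V : nmodType) (F : AT -> 'I_N -> V) :
  \sum_(b : AT * 'I_N) F b.1 b.2 = \sum_a \sum_j F a j.
Proof. by rewrite (pair_bigA _ F). Qed.

Lemma indep_mp (g : AT * 'I_N -> S) : \sum_b g b ^+ p * eb b = 0 -> forall b, g b = 0.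
Proof.
move=> H [a0 j1]; apply/mpolyP => m'; rewrite mcoeff0.
have := congr1 (mcoeff (m' *+ p + ma a0)%MM) H; rewrite raddf_sum mcoeff0.
rewrite (eq_bigr (fun b => (g (b.1, b.2) ^+ p * eb (b.1, b.2))@_(m' *+ p + ma a0)%MM)); last by move=> [].
rewrite (sum_pairs (fun a j => (g (a, j) ^+ p * eb (a, j))@_(m' *+ p + ma a0)%MM)).
under eq_bigr => a _ do under eq_bigr => j _ do rewrite coefx.
rewrite (bigD1 a0) //= [X in _ + X]big1 ?addr0; last by move=> a na; rewrite big1 // => j _; rewrite (negbTE na).
under eq_bigr => j _ do rewrite eqxx.
move=> H0.
have E1 := cKU (g := fun j => (g (a0, j))@_m') (esym H0) j1.
have Z : 0 = \sum_(i < N) (fun _ => 0 : K) i ^+ p * s i.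
  by rewrite big1 // => i _; rewrite expr0n eqn0Ngt p0 mul0r.
by rewrite -E1 (cKU Z).
Qed.

Definition gm c (k : K) (b : AT * 'I_N) : S :=
  if b.1 == cmod c then (cK b.2 k)%:MP * 'X_[cdiv c] else 0.

Lemma mono_exp c (k : K) : 'X_[c] * k%:MP = \sum_b gm c k b ^+ p * eb b.
Proof.
rewrite (eq_bigr (fun b => gm c k (b.1,b.2) ^+ p * eb (b.1,b.2))); last by case.
rewrite (sum_pairs (fun a j => gm c k (a,j) ^+p * eb (a,j))).
rewrite (bigD1 (cmod c)) //= [X in _ + X]big1 ?addr0; last first.
  move=> a na; rewrite big1 // => j _; rewrite /gm /= (negbTE na).
  by rewrite expr0n eqn0Ngt p0 mul0r.
have E j : gm c k (cmod c, j) ^+ p * eb (cmod c, j) = (cK j k ^+ p * s j)%:MP * 'X_[c].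
  rewrite /gm /eb /= eqxx exprMn -rmorphXn mpolyXn [_ * (s j)%:MP]mulrC mulrACA.
  by rewrite -mpolyCM -mpolyXD -cdecomp.
rewrite (eq_bigr _ (fun j _ => E j)) -mulr_suml -rmorph_sum -cKE.
by rewrite mulrC.
Qed.

Lemma span_mp (v : S) : exists g : AT * 'I_N -> S, v = \sum_b g b ^+ p * eb b.
Proof.
pose Rep (v : S) := exists g : AT * 'I_N -> S, v = \sum_b g b ^+ p * eb b.
have R0 : Rep 0.
  exists (fun _ => 0); rewrite big1 // => b _; by rewrite expr0n eqn0Ngt p0 mul0r.
have RD x y : Rep x -> Rep y -> Rep (x + y).
  move=> [g ->] [h ->]; exists (fun b => g b + h b).
  by rewrite -big_split; apply: eq_bigr => b _; rewrite (frD FS) mulrDl.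
rewrite (mpolyE v); apply: (big_ind Rep) => // m _.
exists (gm m v@_m); by rewrite -mono_exp mulrC mul_mpolyC.
Qed.

Definition pib := crd span_mp.
Definition mtop : 'X_{1..n} := [multinom p.-1 | i < n].
Definition Phib := pib (cmod mtop, j0).
Definition mt (a : AT) : 'X_{1..n} := [multinom (p.-1 - a i)%N | i < n].
Definition tb (b : AT * 'I_N) : S := 'X_[mt b.1] * (d b.2)%:MP.

Lemma pibH b : frob_hom p (pib b).
Proof. exact: (crd_hom FS span_mp indep_mp). Qed.

Lemma pibE v : v = \sum_b pib b v ^+ p * eb b.
Proof. exact: crdE. Qed.

Lemma pib_mono c k b : pib b ('X_[c] * k%:MP) = gm c k b.
Proof. exact: (crd_uniq FS span_mp indep_mp (mono_exp c k)). Qed.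

Lemma ptop : (p.-1 < p)%N.
Proof. by rewrite ltn_predL. Qed.

Lemma cmod_top a b : (cmod (mt a + ma b)%MM == cmod mtop) = (a == b).
Proof.
apply/eqP/eqP => [E|<-].
  apply/ffunP => i; apply/val_inj; have := congr1 (fun f : AT => val (f i)) E.
  rewrite !ffunE /= mnmDE !mnmE (modn_small ptop) => /eqP.
  by rewrite modtop ?ltn_ord // => /eqP.
apply/ffunP => i; apply/val_inj; rewrite !ffunE /= mnmDE !mnmE (modn_small ptop).
by apply/eqP; rewrite modtop ?ltn_ord.
Qed.

Lemma cdiv_top a : cdiv (mt a + ma a)%MM = 0%MM.
Proof.
apply/mnmP => i; rewrite !mnmE subnK; last by rewrite -ltnS prednK ?ltn_ord.
by rewrite divn_small ?ptop.
Qed.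

Lemma Phi_te b c : Phib (tb b * eb c) = (b == c)%:R.
Proof.
case: b c => [a j] [a' k]; rewrite /tb /eb /= mulrACA.
rewrite -mpolyXD -mpolyCM /Phib pib_mono /gm /= eq_sym cmod_top xpair_eqE.
case E: (a == a') => //=; move/eqP: E => <-.
by rewrite cdiv_top mpolyX0 mulr1 cKd rmorph_nat.
Qed.

Lemma pib_Phi b v : pib b v = Phib (tb b * v).
Proof.
have PhibH : frob_hom p Phib := pibH _.
rewrite {2}(pibE v) mulr_sumr (fh_sum PhibH).
rewrite (bigD1 b) //= big1 ?addr0.
  by rewrite mulrCA (fhM PhibH) Phi_te eqxx mulr1.
by move=> c nc; rewrite mulrCA (fhM PhibH) Phi_te eq_sym (negbTE nc) mulr0.
Qed.

Lemma fbasis_p : fbasis S p.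
Proof.
exists (AT * 'I_N)%type, eb, pib, Phib, tb; split.
- exact: pibH.
- exact: pibH.
- exact: pibE.
- exact: pib_Phi.
Qed.
End MP.

Lemma mpoly_fbasis (p : nat) (K : fieldType) (n : nat) :
  prime p -> p \in [pchar K] -> Ffinite_field p K ->
  forall e, fbasis {mpoly K[n]} (p ^ e).
Proof.
move=> pp pK FF.
have [N [s [cK [j0 [d [H1 H2 H3 H4]]]]]] := Kbasis pK FF.
have Fp := fbasis_p n pK H2 H3 H4.
have FS : frobadd {mpoly K[n]} p := frobadd_pchar (rmorph_pchar (@mpolyC n K) pK).
elim => [|e IH]; first by rewrite expn0; exact: fbasis1.
by rewrite expnSr; exact: fbasis_comp FS Fp IH.
Qed.

Lemma hmax_ideal (K : fieldType) (n : nat) : is_ideal (@hmax K n).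
Proof.
rewrite /hmax; split; first exact: mcoeff0.
  by move=> x y hx hy; rewrite mcoeffD hx hy addr0.
by move=> x y hy; rewrite ((mcoeff0_is_multiplicative _ _).1 x y) hy mulr0.
Qed.

Lemma homog0 (K : fieldType) (n : nat) (f : {mpoly K[n]}) :
  homog_comp 0 f = (f@_0)%:MP.
Proof.
rewrite /homog_comp.
under eq_bigl => m do rewrite mdeg_eq0.
have [H|H] := boolP (0%MM \in msupp f).
  rewrite big_mkcond (bigD1_seq 0%MM) ?msupp_uniq //= eqxx big1 ?addr0.
    by rewrite mpolyX0 -alg_mpolyC.
  by move=> m /negbTE ->.
rewrite big_seq_cond big1; last by move=> m /andP [mf /eqP Hm]; move: H; rewrite -Hm mf.
by move: H; rewrite mcoeff_msupp negbK => /eqP ->; rewrite mpolyC0.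
Qed.

Theorem lemma4p1 (p : nat) (K : fieldType) (n : nat) (I : {mpoly K[n]} -> Prop)
    (R : comNzRingType) (pi : {rmorphism {mpoly K[n]} -> R}) :
  prime p -> p \in [pchar K] -> Ffinite_field p K ->
  (forall r : R, exists f, pi f = r) -> (forall f, I f <-> pi f = 0) ->
  homogeneous_ideal I -> Fpure R p ->
  let m : R -> Prop := fun r => exists f, hmax f /\ pi f = r in
  (forall r, splitting_prime p m r <-> m r) <->
  (forall e : nat, subideal (colon (frob_power (p ^ e) I) I)
                            (colon (frob_power (p ^ e) (@hmax K n)) (@hmax K n))).
Proof.
move=> pp pK FF piS HI Hhom _ m.
have kerJ f : pi f = 0 -> hmax f.
  move=> /HI /(Hhom _ 0%N); rewrite homog0 => /HI Hc.
  apply/eqP; apply/negP => /negP nz.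
  have : pi (((f@_0)^-1 * f@_0)%:MP) = 0 by rewrite mpolyCM rmorphM Hc mulr0.
  by rewrite mulVf // mpolyC1 rmorph1 => /eqP; rewrite oner_eq0.
have FB := mpoly_fbasis n pp pK FF.
split.
  move=> H e; apply: (dir1 piS HI (hmax_ideal K n) kerJ (FB e)).
  move=> g Jg ph phH; apply: ((H (pi g)).2 (ex_intro _ g (conj Jg erefl)) e ph phH).
move=> Hc r; split.
  move=> /(_ 0%N id); rewrite expn0; apply; split => //.
move=> [g [Jg <-]] e ph phH.
exact: (dir2 piS HI (hmax_ideal K n) (FB e) (Hc e) Jg phH).
Qed.
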